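(* With $\beta=\frac1k-\frac\theta{2k}$, the lattices $\varphi_\beta(\mathcal{O}_\mathbb{L})$ (rotated $\mathbb{Z}^k$) and $\varphi_\beta(L')$ (rotated $D_k$) have maximum diversity, and $d_{p,\min}(\varphi_\beta(\mathcal{O}_\mathbb{L}))=2^{(1-(m-1)k)/2}$, $d_{p,\min}(\varphi_\beta(L'))=2^{(3-(m-1)k)/2}$.
   Context: Let $m\ge3$, $k=2^{m-2}$, $\omega=e^{2\pi i/2^m}$, $\theta_j=\omega^j+\omega^{-j}$, $\theta=\theta_1$, $\mathbb{L}=\mathbb{Q}(\theta)$ (totally real, degree $k$, $\mathcal{O}_\mathbb{L}=\mathbb{Z}[\theta]$). Let $L'$ be the $\mathbb{Z}$-module generated by $2+\theta_1,\theta_1,\theta_2,\dots,\theta_{k-1}$. Let $\tau$ be a generator of $\mathrm{Gal}(\mathbb{L}/\mathbb{Q})$; for totally positive $\beta\in\mathbb{L}$, $\varphi_\beta(y)=(\sqrt{\tau^j(\beta)}\tau^j(y))_{j=0}^{k-1}$. A lattice has maximum diversity if each nonzero vector has all coordinates nonzero; then $d_{p,\min}(\Lambda)=\inf\{|y_1\cdots y_k|:0\ne y\in\Lambda\}$. *)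

(* Defs.v *)
From Stdlib Require Import Reals ZArith Lia Lra.
Open Scope R_scope.

Fixpoint sumR (n : nat) (f : nat -> R) : R :=
  match n with O => 0 | S n' => sumR n' f + f n' end.
Fixpoint prodR (n : nat) (f : nat -> R) : R :=
  match n with O => 1 | S n' => prodR n' f * f n' end.

Definition kk (m : nat) : nat := Nat.pow 2 (m - 2).

(* g (odd) determines the generator tau of Gal(L/Q) via tau(theta) = theta_g,
   i.e. omega |-> omega^g.  tau generates iff the classes +-g^j (j<k) are
   pairwise distinct modulo 2^m. *)
Definition is_gen (m g : nat) : Prop :=
  Z.odd (Z.of_nat g) = true /\
  forall i j : nat, (i < kk m)%nat -> (j < kk m)%nat ->
    ((Z.of_nat g ^ Z.of_nat i - Z.of_nat g ^ Z.of_nat j) mod (2 ^ Z.of_nat m) = 0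
     \/ (Z.of_nat g ^ Z.of_nat i + Z.of_nat g ^ Z.of_nat j) mod (2 ^ Z.of_nat m) = 0)%Z ->
    i = j.

(* tau^j(theta_i) = omega^(i g^j) + omega^(-i g^j) = 2 cos(2 pi i g^j / 2^m),
   with L embedded in R by theta = 2 cos(2 pi / 2^m). *)
Definition tau_theta_i (m g j i : nat) : R :=
  2 * cos (2 * PI * INR (i * Nat.pow g j) / 2 ^ m).

Definition tau_beta (m g j : nat) : R :=
  1 / INR (kk m) - tau_theta_i m g j 1 / (2 * INR (kk m)).

(* element y_c = sum_{i<k} c_i theta^i of O_L = Z[theta]; tau^j(y_c) *)
Definition tau_OL (m g : nat) (c : nat -> Z) (j : nat) : R :=
  sumR (kk m) (fun i => IZR (c i) * (tau_theta_i m g j 1) ^ i).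

(* element c_0 (2+theta_1) + sum_{1<=i<k} c_i theta_i of L'; tau^j of it *)
Definition tau_Lp (m g : nat) (c : nat -> Z) (j : nat) : R :=
  IZR (c O) * (2 + tau_theta_i m g j 1)
  + sumR (kk m) (fun i => if Nat.eqb i 0 then 0 else IZR (c i) * tau_theta_i m g j i).

Definition phi_beta (m g : nat) (tauy : nat -> R) (j : nat) : R :=
  sqrt (tau_beta m g j) * tauy j.

Definition lattice_OL (m g : nat) (v : nat -> R) : Prop :=
  exists c : nat -> Z, forall j, (j < kk m)%nat -> v j = phi_beta m g (tau_OL m g c) j.
Definition lattice_Lp (m g : nat) (v : nat -> R) : Prop :=
  exists c : nat -> Z, forall j, (j < kk m)%nat -> v j = phi_beta m g (tau_Lp m g c) j.

Definition nonzero_vec (n : nat) (v : nat -> R) : Prop :=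
  exists j, (j < n)%nat /\ v j <> 0.

Definition max_diversity (n : nat) (Lam : (nat -> R) -> Prop) : Prop :=
  forall v, Lam v -> nonzero_vec n v -> forall j, (j < n)%nat -> v j <> 0.

Definition is_inf (S : R -> Prop) (x : R) : Prop :=
  (forall y, S y -> x <= y) /\ (forall z, (forall y, S y -> z <= y) -> z <= x).

Definition dpmin_is (n : nat) (Lam : (nat -> R) -> Prop) (x : R) : Prop :=
  is_inf (fun r => exists v, Lam v /\ nonzero_vec n v /\ r = Rabs (prodR n v)) x.

(* Main.v *)
Require Import Defs.
From Stdlib Require Import Reals ZArith Lia Lra List Permutation.
Open Scope R_scope.
Import ListNotations.

Inductive IP : (R -> R) -> Prop :=
| IPc (n : Z) : IP (fun _ => IZR n)
| IPx : IP (fun x => x)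
| IPadd f h : IP f -> IP h -> IP (fun x => f x + h x)
| IPmul f h : IP f -> IP h -> IP (fun x => f x * h x)
| IPext f h : IP f -> (forall x, f x = h x) -> IP h.

Lemma IP_diff f : IP f -> forall u v : Z, exists n1 n2 d,
  f (IZR u) = IZR n1 /\ f (IZR v) = IZR n2 /\ (n1 - n2 = d * (u - v))%Z.
Proof.
  induction 1; intros u v.
  - exists n, n, 0%Z. repeat split; ring.
  - exists u, v, 1%Z. repeat split; ring.
  - destruct (IHIP1 u v) as (a1&a2&d1&E1&E2&D1).
    destruct (IHIP2 u v) as (b1&b2&d2&F1&F2&D2).
    exists (a1+b1)%Z, (a2+b2)%Z, (d1+d2)%Z. rewrite E1, E2, F1, F2, !plus_IZR.
    repeat split; lia.
  - destruct (IHIP1 u v) as (a1&a2&d1&E1&E2&D1).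
    destruct (IHIP2 u v) as (b1&b2&d2&F1&F2&D2).
    exists (a1*b1)%Z, (a2*b2)%Z, (a1*d2 + b2*d1)%Z. rewrite E1, E2, F1, F2, !mult_IZR.
    repeat split; nia.
  - destruct (IHIP u v) as (a1&a2&d1&E1&E2&D1). exists a1, a2, d1.
    rewrite <- !H0. auto.
Qed.

Lemma IP_int f : IP f -> forall u : Z, exists n, f (IZR u) = IZR n.
Proof. intros H u. destruct (IP_diff f H u u) as (a&_&_&E&_). eauto. Qed.

Lemma IP_dec f : IP f -> exists a b, IP a /\ IP b /\
  forall x, f x = a (x*x-2) + x * b (x*x-2).
Proof.
  induction 1.
  - exists (fun _ => IZR n), (fun _ => 0). repeat split; try constructor. intros; ring.
  - exists (fun _ => 0), (fun _ => 1). repeat split; try constructor. intros; ring.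
  - destruct IHIP1 as (a1&b1&A1&B1&E1). destruct IHIP2 as (a2&b2&A2&B2&E2).
    exists (fun s => a1 s + a2 s), (fun s => b1 s + b2 s).
    repeat split; try (constructor; auto). intros; rewrite E1, E2; ring.
  - destruct IHIP1 as (a1&b1&A1&B1&E1). destruct IHIP2 as (a2&b2&A2&B2&E2).
    exists (fun s => a1 s * a2 s + (s + IZR 2) * (b1 s * b2 s)),
           (fun s => a1 s * b2 s + b1 s * a2 s).
    repeat split.
    + repeat constructor; auto.
    + repeat constructor; auto.
    + intros; rewrite E1, E2; ring.
  - destruct IHIP as (a&b&A&B&E). exists a, b. repeat split; auto.
    intros; rewrite <- H0; auto.
Qed.

(* the conjugate sets *)
Fixpoint SS (n : nat) : list R :=
  match n with
  | O => [0]
  | S n' => flat_map (fun w => [sqrt (w+2); - sqrt (w+2)]) (SS n')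
  end.

Definition lprod (l : list R) (f : R -> R) : R := fold_right (fun w acc => f w * acc) 1 l.

Lemma lprod_app l1 l2 f : lprod (l1 ++ l2) f = lprod l1 f * lprod l2 f.
Proof. induction l1; simpl; [ring| rewrite IHl1; ring]. Qed.

Lemma lprod_ext l f h : (forall w, In w l -> f w = h w) -> lprod l f = lprod l h.
Proof. induction l; simpl; intros H; auto. rewrite H, IHl; auto. Qed.

Lemma lprod_mul l f h : lprod l (fun w => f w * h w) = lprod l f * lprod l h.
Proof. induction l; simpl; [ring| rewrite IHl; ring]. Qed.

Lemma lprod_nz l f : (forall w, In w l -> f w <> 0) -> lprod l f <> 0.
Proof. induction l; simpl; intros H. lra. apply Rmult_integral_contrapositive; split; auto. Qed.

Lemma lprod_perm l l' f : Permutation l l' -> lprod l f = lprod l' f.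
Proof. induction 1; simpl; try ring; congruence. Qed.

Lemma lprod_SS n f : lprod (SS (S n)) f =
  lprod (SS n) (fun w => f (sqrt (w+2)) * f (- sqrt (w+2))).
Proof.
  simpl. induction (SS n); simpl; auto. rewrite IHl. ring.
Qed.

Lemma SS_range n w : In w (SS n) -> -2 < w < 2.
Proof.
  revert w; induction n; simpl; intros w H.
  - destruct H as [<-|[]]; lra.
  - apply in_flat_map in H. destruct H as (u&Hu&H). apply IHn in Hu.
    assert (0 < sqrt (u+2)) by (apply sqrt_lt_R0; lra).
    assert (sqrt (u+2) * sqrt (u+2) = u+2) by (apply sqrt_sqrt; lra).
    assert (sqrt (u+2) < 2) by nra.
    simpl in H; destruct H as [<-|[<-|[]]]; lra.
Qed.

Lemma SS_len n : length (SS n) = (2 ^ n)%nat.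
Proof.
  induction n; simpl; auto. rewrite <- IHn. clear IHn. induction (SS n); simpl; auto.
  rewrite IHl. lia.
Qed.

Lemma sq_sqrt w : -2 < w -> sqrt (w+2) * sqrt (w+2) = w + 2.
Proof. intros; apply sqrt_sqrt; lra. Qed.

Lemma norm_int n f : IP f -> exists N, lprod (SS n) f = IZR N.
Proof.
  revert f; induction n; intros f Hf.
  - destruct (IP_int f Hf 0) as [z Hz]. exists z. simpl. rewrite Hz. ring.
  - destruct (IP_dec f Hf) as (a&b&A&B&E).
    set (F := fun w => a w * a w - (w + 2) * (b w * b w)).
    assert (HF : IP F).
    { unfold F. apply IPext with (fun w => a w * a w + (IZR (-1)) * ((w + IZR 2) * (b w * b w))).
      repeat constructor; auto. intros; simpl; ring. }
    destruct (IHn F HF) as [N HN]. exists N. rewrite lprod_SS, <- HN.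
    apply lprod_ext. intros w Hw. apply SS_range in Hw.
    pose proof (sq_sqrt w (proj1 Hw)). rewrite !E. unfold F.
    replace (- sqrt (w+2) * - sqrt (w+2) - 2) with w by lra.
    replace (sqrt (w+2) * sqrt (w+2) - 2) with w by lra.
    set (s := sqrt (w+2)) in *. rewrite <- H. ring.
Qed.

Lemma norm_even n f z : IP f -> f 0 = IZR z -> Z.even z = true ->
  exists N, lprod (SS n) f = IZR N /\ Z.even N = true.
Proof.
  revert f z; induction n; intros f z Hf Hz Ez.
  - exists z. simpl. rewrite Hz. split; auto; ring.
  - destruct (IP_dec f Hf) as (a&b&A&B&E).
    set (F := fun w => a w * a w - (w + 2) * (b w * b w)).
    assert (HF : IP F).
    { unfold F. apply IPext with (fun w => a w * a w + (IZR (-1)) * ((w + IZR 2) * (b w * b w))).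
      repeat constructor; auto. intros; simpl; ring. }
    destruct (IP_diff a A 0 (-2)) as (a0&a2&d&Ha0&Ha2&D).
    destruct (IP_int b B 0) as (b0&Hb0).
    assert (Hf0 : f 0 = a (-2)) by (rewrite E; replace (0*0-2) with (-2) by ring; ring).
    rewrite Hz in Hf0. replace (-2) with (IZR (-2)) in Hf0 by reflexivity.
    rewrite Ha2 in Hf0. apply eq_IZR in Hf0. subst a2.
    destruct (IHn F (a0*a0 - 2*(b0*b0))%Z HF) as [N [HN EN]].
    + unfold F. rewrite Ha0, Hb0. rewrite minus_IZR, !mult_IZR. simpl. ring.
    + apply Z.even_spec in Ez. destruct Ez as [e He]. apply Z.even_spec.
      exists (2*(d*d) + 4*d*e + 2*e*e - b0*b0)%Z. nia.
    + exists N. split; auto. rewrite lprod_SS, <- HN.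
      apply lprod_ext. intros w Hw. apply SS_range in Hw.
      pose proof (sq_sqrt w (proj1 Hw)). rewrite !E. unfold F.
      replace (- sqrt (w+2) * - sqrt (w+2) - 2) with w by lra.
      replace (sqrt (w+2) * sqrt (w+2) - 2) with w by lra.
      set (s := sqrt (w+2)) in *. rewrite <- H. ring.
Qed.

Lemma norm_two n : lprod (SS n) (fun x => 2 - x) = 2 /\ lprod (SS n) (fun x => 2 + x) = 2.
Proof.
  induction n.
  - simpl. split; ring.
  - destruct IHn as [H1 H2].
    assert (K : forall s, lprod (SS n) (fun w => s (sqrt (w+2)) * s (- sqrt (w+2))) = 2 ->
       True) by auto.
    rewrite !lprod_SS. split; (etransitivity; [|exact H1]); apply lprod_ext; intros w Hw;
      apply SS_range in Hw; pose proof (sq_sqrt w (proj1 Hw)); nra.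
Qed.

Lemma no_sqrt2 : forall (n : nat) (a b : Z), (Z.abs b <= Z.of_nat n)%Z ->
  (a*a = 2*(b*b))%Z -> b = 0%Z.
Proof.
  induction n; intros a b Hb H. lia.
  destruct (Z.even a) eqn:Ea.
  - apply Z.even_spec in Ea. destruct Ea as [c ->].
    destruct (Z.even b) eqn:Eb.
    + apply Z.even_spec in Eb. destruct Eb as [d ->].
      assert (d = 0%Z). { apply (IHn c d). lia. nia. } lia.
    + exfalso. assert (Z.odd b = true) by (rewrite <- Z.negb_even, Eb; auto).
      apply Z.odd_spec in H0. destruct H0 as [d ->]. nia.
  - exfalso. assert (Z.odd a = true) by (rewrite <- Z.negb_even, Ea; auto).
    apply Z.odd_spec in H0. destruct H0 as [d ->]. nia.
Qed.

Lemma vanish n f : IP f -> forall z, In z (SS n) -> f z = 0 -> forall w, In w (SS n) -> f w = 0.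
Proof.
  revert f; induction n; intros f Hf z Hz Hfz w Hw.
  - simpl in *. destruct Hz as [<-|[]]; destruct Hw as [<-|[]]; auto.
  - destruct (IP_dec f Hf) as (a&b&A&B&E).
    simpl in Hz, Hw. apply in_flat_map in Hz, Hw.
    destruct Hz as (u&Hu&Hz). destruct Hw as (u'&Hu'&Hw).
    pose proof (SS_range _ _ Hu) as Ru. pose proof (SS_range _ _ Hu') as Ru'.
    pose proof (sq_sqrt u (proj1 Ru)). pose proof (sq_sqrt u' (proj1 Ru')).
    assert (Hzu : z * z - 2 = u) by (simpl in Hz; destruct Hz as [<-|[<-|[]]]; lra).
    assert (Hwu : w * w - 2 = u') by (simpl in Hw; destruct Hw as [<-|[<-|[]]]; lra).
    rewrite E, Hzu in Hfz. rewrite E, Hwu.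
    destruct (Req_dec (b u) 0) as [Hb|Hb].
    + rewrite Hb in Hfz. assert (a u = 0) by lra.
      rewrite (IHn a A u Hu H1 u' Hu'), (IHn b B u Hu Hb u' Hu'). ring.
    + exfalso.
      assert (Hbn : forall v, In v (SS n) -> b v <> 0).
      { intros v Hv Hbv. apply Hb. exact (IHn b B v Hv Hbv u Hu). }
      set (F := fun w => a w * a w - (w + 2) * (b w * b w)).
      assert (HF : IP F).
      { unfold F. apply IPext with (fun w => a w * a w + (IZR (-1)) * ((w + IZR 2) * (b w * b w))).
        repeat constructor; auto. intros; simpl; ring. }
      assert (F u = 0).
      { unfold F. assert (a u = - z * b u) by lra. rewrite H1. rewrite <- Hzu. ring. }
      assert (HA : lprod (SS n) (fun v => a v * a v) =
                   lprod (SS n) (fun v => 2 + v) * lprod (SS n) (fun v => b v * b v)).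
      { rewrite <- lprod_mul. apply lprod_ext. intros v Hv.
        pose proof (IHn F HF u Hu H1 v Hv). unfold F in H2. lra. }
      rewrite (proj2 (norm_two n)), !lprod_mul in HA.
      destruct (norm_int n a A) as [NA HNA]. destruct (norm_int n b B) as [NB HNB].
      rewrite HNA, HNB in HA.
      assert (NB <> 0%Z).
      { intro. subst. apply (lprod_nz (SS n) b Hbn). rewrite HNB. reflexivity. }
      apply H2. apply (no_sqrt2 (Z.to_nat (Z.abs NB)) NA NB). lia.
      apply eq_IZR. rewrite !mult_IZR. simpl. lra.
Qed.

Lemma mem n a : Nat.odd a = true -> In (2 * cos (2 * PI * INR a / 2 ^ (S (S n)))) (SS n).
Proof.
  revert a; induction n; intros a Ha.
  - apply Nat.odd_spec in Ha. destruct Ha as [b ->]. simpl SS.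
    left. rewrite cos_eq_0_1. ring. exists (Z.of_nat b).
    rewrite <- INR_IZR_INZ. rewrite plus_INR, mult_INR. simpl. field.
  - set (t := 2 * PI * INR a / 2 ^ S (S (S n))).
    pose proof (IHn a Ha) as H.
    replace (2 * PI * INR a / 2 ^ S (S n)) with (2 * t) in H
      by (unfold t; simpl; field; apply pow_nonzero; lra).
    rewrite cos_2a_cos in H.
    simpl SS. apply in_flat_map. eexists; split; [exact H|].
    replace (2 * (2 * cos t * cos t - 1) + 2) with ((2 * cos t) * (2 * cos t)) by ring.
    destruct (Rle_dec 0 (cos t)).
    + left. rewrite sqrt_square; lra.
    + right; left. replace (2 * cos t * (2 * cos t)) with ((- (2 * cos t)) * (- (2 * cos t))) by ring.
      rewrite sqrt_square; lra.
Qed.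

Lemma cos_eq_mod (p q : nat) (M : Z) : (0 < M)%Z ->
  cos (2 * PI * INR p / IZR M) = cos (2 * PI * INR q / IZR M) ->
  ((Z.of_nat p - Z.of_nat q) mod M = 0 \/ (Z.of_nat p + Z.of_nat q) mod M = 0)%Z.
Proof.
  intros HM H. assert (HM' : IZR M <> 0) by (apply not_0_IZR; lia).
  pose proof (form2 (2 * PI * INR p / IZR M) (2 * PI * INR q / IZR M)) as F.
  rewrite H, Rminus_diag in F.
  assert (sin ((2 * PI * INR p / IZR M - 2 * PI * INR q / IZR M) / 2) = 0 \/
          sin ((2 * PI * INR p / IZR M + 2 * PI * INR q / IZR M) / 2) = 0) as [S|S].
  { destruct (Req_dec (sin ((2 * PI * INR p / IZR M - 2 * PI * INR q / IZR M) / 2)) 0); auto.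
    right. symmetry in F; apply Rmult_integral in F. destruct F as [F|F]; auto.
    apply Rmult_integral in F. destruct F; lra. }
  - left. apply sin_eq_0_0 in S. destruct S as [z Hz].
    rewrite !INR_IZR_INZ in Hz.
    assert (IZR (Z.of_nat p - Z.of_nat q) = IZR (z * M)).
    { rewrite minus_IZR, mult_IZR. pose proof PI_RGT_0.
      apply (Rmult_eq_reg_r (PI / IZR M)). transitivity (IZR z * PI). rewrite <- Hz. field. auto. field. auto.
      intro X. apply Rmult_integral in X. destruct X as [X|X]; [lra|].
      apply Rinv_neq_0_compat in HM'. lra. }
    apply eq_IZR in H0. rewrite H0. apply Z.mod_mul. lia.
  - right. apply sin_eq_0_0 in S. destruct S as [z Hz].
    rewrite !INR_IZR_INZ in Hz.
    assert (IZR (Z.of_nat p + Z.of_nat q) = IZR (z * M)).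
    { rewrite plus_IZR, mult_IZR. pose proof PI_RGT_0.
      apply (Rmult_eq_reg_r (PI / IZR M)). transitivity (IZR z * PI). rewrite <- Hz. field. auto. field. auto.
      intro X. apply Rmult_integral in X. destruct X as [X|X]; [lra|].
      apply Rinv_neq_0_compat in HM'. lra. }
    apply eq_IZR in H0. rewrite H0. apply Z.mod_mul. lia.
Qed.

Lemma prodR_lprod k (h : nat -> R) f : prodR k (fun j => f (h j)) = lprod (map h (seq 0 k)) f.
Proof.
  induction k. reflexivity. cbn [prodR]. rewrite seq_S, map_app, lprod_app, <- IHk. simpl. ring.
Qed.

Lemma prodR_ext n f h : (forall j, (j < n)%nat -> f j = h j) -> prodR n f = prodR n h.
Proof. induction n; simpl; intros H; auto. rewrite IHn, H; auto. Qed.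

Lemma prodR_mul n f h : prodR n (fun j => f j * h j) = prodR n f * prodR n h.
Proof. induction n; simpl; [ring|rewrite IHn; ring]. Qed.

Lemma prodR_const n c : prodR n (fun _ => c) = c ^ n.
Proof. induction n; simpl; [ring|rewrite IHn; ring]. Qed.

Lemma prodR_sqrt n f : (forall j, (j < n)%nat -> 0 <= f j) ->
  prodR n (fun j => sqrt (f j)) = sqrt (prodR n f).
Proof.
  induction n; simpl; intros H. symmetry; apply sqrt_1.
  rewrite IHn by auto. rewrite sqrt_mult_alt; auto.
  clear IHn. induction n; simpl. lra. apply Rmult_le_pos; auto.
Qed.

Lemma IP_sum n (h : nat -> R -> R) : (forall i, IP (h i)) -> IP (fun x => sumR n (fun i => h i x)).
Proof.
  intros H; induction n; simpl.
  - apply IPext with (fun _ => IZR 0); [constructor|reflexivity].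
  - apply IPadd; auto.
Qed.

Lemma IP_pow i : IP (fun x => x ^ i).
Proof.
  induction i; simpl.
  - apply IPext with (fun _ => IZR 1); [constructor|reflexivity].
  - apply IPmul; [constructor|auto].
Qed.

Fixpoint T (i : nat) (x : R) : R :=
  match i with O => 2 | S i' => match i' with O => x | S i'' => x * T i' x - T i'' x end end.

Lemma T_cos i t : T i (2 * cos t) = 2 * cos (INR i * t) /\ T (S i) (2 * cos t) = 2 * cos (INR (S i) * t).
Proof.
  induction i.
  - simpl. split. rewrite Rmult_0_l, cos_0; ring. rewrite Rmult_1_l; ring.
  - destruct IHi as [H1 H2]. split; auto.
    change (T (S (S i)) (2 * cos t)) with (2 * cos t * T (S i) (2 * cos t) - T i (2 * cos t)).
    rewrite H1, H2.
    replace (INR (S (S i)) * t) with (INR (S i) * t + t) by (rewrite (S_INR (S i)); ring).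
    replace (INR i * t) with (INR (S i) * t - t) by (rewrite (S_INR i); ring).
    rewrite cos_plus, cos_minus. ring.
Qed.

Lemma T_IP i : IP (T i) /\ IP (T (S i)).
Proof.
  induction i.
  - split. apply IPext with (fun _ => IZR 2); [constructor|reflexivity]. constructor.
  - destruct IHi as [H1 H2]. split; auto.
    apply IPext with (fun x => x * T (S i) x + IZR (-1) * T i x).
    + repeat constructor; auto.
    + intros; simpl; ring.
Qed.

Lemma T_even i : (exists z, T i 0 = IZR (2 * z)) /\ (exists z, T (S i) 0 = IZR (2 * z)).
Proof.
  induction i.
  - split. exists 1%Z; reflexivity. exists 0%Z; reflexivity.
  - destruct IHi as [H1 [z H2]]. split. exists z; auto.
    destruct H1 as [w Hw]. exists (- w)%Z.
    change (T (S (S i)) 0) with (0 * T (S i) 0 - T i 0). rewrite Hw, !mult_IZR, opp_IZR. ring.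
Qed.

Lemma sum_even n h : (forall i, exists z, h i = IZR (2 * z)) -> exists z, sumR n h = IZR (2 * z).
Proof.
  intros H; induction n; cbn [sumR]. exists 0%Z; reflexivity.
  destruct IHn as [a Ha]. destruct (H n) as [b Hb]. exists (a + b)%Z.
  rewrite Ha, Hb, !mult_IZR, plus_IZR. ring.
Qed.

Lemma sumR_ext n f h : (forall j, (j < n)%nat -> f j = h j) -> sumR n f = sumR n h.
Proof. induction n; simpl; intros H; auto. rewrite IHn, H; auto. Qed.

Definition X n g j := tau_theta_i (S (S n)) g j 1.

Lemma odd_g g : Z.odd (Z.of_nat g) = true -> forall j, Nat.odd (Nat.pow g j) = true.
Proof.
  intros H. assert (Hg : Nat.odd g = true).
  { apply Z.odd_spec in H. destruct H as [b Hb]. apply Nat.odd_spec.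
    exists (Z.to_nat b). lia. }
  induction j; simpl; auto. rewrite Nat.odd_mul, Hg, IHj; auto.
Qed.

Lemma kk_eq n : kk (S (S n)) = Nat.pow 2 n.
Proof. unfold kk. f_equal. lia. Qed.

Lemma X_mem n g (hg : is_gen (S (S n)) g) j : In (X n g j) (SS n).
Proof.
  unfold X, tau_theta_i. rewrite Nat.mul_1_l. apply mem. apply odd_g, (proj1 hg).
Qed.

Lemma X_range n g (hg : is_gen (S (S n)) g) j : -2 < X n g j < 2.
Proof. exact (SS_range _ _ (X_mem n g hg j)). Qed.

Lemma X_perm n g (hg : is_gen (S (S n)) g) :
  Permutation (map (X n g) (seq 0 (Nat.pow 2 n))) (SS n).
Proof.
  apply NoDup_Permutation_bis.
  - apply FinFun.Injective_map_NoDup_in; [|apply seq_NoDup].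
    intros i j Hi Hj E. apply in_seq in Hi, Hj.
    unfold X, tau_theta_i in E. rewrite !Nat.mul_1_l in E.
    assert (E' : cos (2 * PI * INR (Nat.pow g i) / IZR (2 ^ Z.of_nat (S (S n))))
               = cos (2 * PI * INR (Nat.pow g j) / IZR (2 ^ Z.of_nat (S (S n))))).
    { rewrite <- !pow_IZR. lra. }
    apply cos_eq_mod in E'; [|apply Z.pow_pos_nonneg; lia].
    rewrite !Nat2Z.inj_pow in E'.
    apply (proj2 hg); rewrite ?kk_eq; try lia; exact E.
  - rewrite SS_len, length_map, length_seq. lia.
  - intros y Hy. apply in_map_iff in Hy. destruct Hy as (j&<-&_). apply X_mem; auto.
Qed.

Lemma prodX n g (hg : is_gen (S (S n)) g) f :
  prodR (Nat.pow 2 n) (fun j => f (X n g j)) = lprod (SS n) f.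
Proof. rewrite prodR_lprod. apply lprod_perm, X_perm; auto. Qed.

Lemma beta_eq n g j : tau_beta (S (S n)) g j = (2 - X n g j) * / (2 * 2 ^ n).
Proof.
  unfold tau_beta, X. rewrite kk_eq, pow_INR. replace (INR 2) with 2 by (simpl; ring).
  assert (2 ^ n <> 0) by (apply pow_nonzero; lra). field. auto.
Qed.

Lemma beta_pos n g (hg : is_gen (S (S n)) g) j : 0 < tau_beta (S (S n)) g j.
Proof.
  rewrite beta_eq. pose proof (X_range n g hg j).
  assert (0 < 2 ^ n) by (apply pow_lt; lra).
  apply Rmult_lt_0_compat. lra. apply Rinv_0_lt_compat. lra.
Qed.

Lemma prod_beta n g (hg : is_gen (S (S n)) g) :
  prodR (Nat.pow 2 n) (tau_beta (S (S n)) g) = 2 * / 2 ^ (S n * Nat.pow 2 n).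
Proof.
  rewrite (prodR_ext _ _ (fun j => (2 - X n g j) * / (2 * 2 ^ n))) by (intros; apply beta_eq).
  rewrite prodR_mul, prodR_const, (prodX n g hg (fun x => 2 - x)), (proj1 (norm_two n)).
  rewrite pow_inv, pow_mult. reflexivity.
Qed.

Definition Bn n := sqrt (2 * / 2 ^ (S n * Nat.pow 2 n)).

Lemma prod_phi n g (hg : is_gen (S (S n)) g) (tauy : nat -> R) (f : R -> R)
  (Ht : forall j, (j < Nat.pow 2 n)%nat -> tauy j = f (X n g j)) :
  Rabs (prodR (Nat.pow 2 n) (phi_beta (S (S n)) g tauy)) = Bn n * Rabs (lprod (SS n) f).
Proof.
  unfold phi_beta. rewrite prodR_mul, prodR_sqrt.
  2:{ intros; left; apply beta_pos; auto. }
  rewrite prod_beta by auto. rewrite (prodR_ext _ _ (fun j => f (X n g j))) by auto.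
  rewrite prodX by auto. rewrite Rabs_mult, Rabs_pos_eq. reflexivity. apply sqrt_pos.
Qed.

Lemma Bn_val n : Rpower 2 ((1 - (INR (S (S n)) - 1) * INR (kk (S (S n)))) / 2) = Bn n.
Proof.
  unfold Bn. rewrite kk_eq.
  replace ((1 - (INR (S (S n)) - 1) * INR (Nat.pow 2 n)) / 2)
    with ((1 + - INR (S n * Nat.pow 2 n)) * / 2)
    by (rewrite mult_INR, !S_INR; field).
  rewrite <- Rpower_mult, Rpower_sqrt.
  2:{ unfold Rpower. apply exp_pos. }
  rewrite Rpower_plus, Rpower_Ropp, Rpower_1, Rpower_pow by lra. reflexivity.
Qed.

Lemma Bn_val3 n : Rpower 2 ((3 - (INR (S (S n)) - 1) * INR (kk (S (S n)))) / 2) = 2 * Bn n.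
Proof.
  rewrite <- Bn_val. set (u := (INR (S (S n)) - 1) * INR (kk (S (S n)))).
  replace ((3 - u) / 2) with (1 + (1 - u) / 2) by field.
  rewrite Rpower_plus, Rpower_1 by lra. reflexivity.
Qed.

Lemma Bn_pos n : 0 < Bn n.
Proof.
  unfold Bn. apply sqrt_lt_R0. apply Rmult_lt_0_compat. lra.
  apply Rinv_0_lt_compat, pow_lt. lra.
Qed.

Section Gen.
Variables (n g : nat) (hg : is_gen (S (S n)) g)
  (tauy : (nat -> Z) -> nat -> R) (fam : (nat -> Z) -> R -> R)
  (HIP : forall c, IP (fam c))
  (Ht : forall c j, (j < Nat.pow 2 n)%nat -> tauy c j = fam c (X n g j)).

Definition Lam (v : nat -> R) : Prop :=
  exists c : nat -> Z, forall j, (j < kk (S (S n)))%nat -> v j = phi_beta (S (S n)) g (tauy c) j.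

Lemma phi_nz c j : (j < Nat.pow 2 n)%nat ->
  (phi_beta (S (S n)) g (tauy c) j <> 0 <-> fam c (X n g j) <> 0).
Proof.
  intros Hj. unfold phi_beta. rewrite Ht by auto.
  pose proof (sqrt_lt_R0 _ (beta_pos n g hg j)). split; intros H1 H2.
  - apply H1. rewrite H2; ring.
  - apply Rmult_integral in H2. destruct H2; [lra|auto].
Qed.

Lemma gen_maxdiv : max_diversity (kk (S (S n))) Lam.
Proof.
  intros v [c Hc] [i [Hi Hv]] j Hj. rewrite kk_eq in *.
  rewrite Hc in Hv |- * by auto.
  apply phi_nz; auto. apply phi_nz in Hv; auto. intro H0. apply Hv.
  apply (vanish n (fam c) (HIP c) (X n g j) (X_mem n g hg j) H0). apply X_mem; auto.
Qed.

Lemma gen_val v : Lam v -> nonzero_vec (kk (S (S n))) v ->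
  exists c, lprod (SS n) (fam c) <> 0 /\
    Rabs (prodR (kk (S (S n))) v) = Bn n * Rabs (lprod (SS n) (fam c)).
Proof.
  intros [c Hc] [i [Hi Hv]]. exists c. rewrite kk_eq in *. split.
  - apply lprod_nz. intros w Hw H0.
    rewrite Hc in Hv by auto. apply phi_nz in Hv; auto. apply Hv.
    apply (vanish n (fam c) (HIP c) w Hw H0). apply X_mem; auto.
  - rewrite (prodR_ext _ _ (phi_beta (S (S n)) g (tauy c))).
    + apply prod_phi; auto.
    + intros; apply Hc; auto.
Qed.

Lemma gen_att c : fam c (X n g 0) <> 0 ->
  (exists v, Lam v /\ nonzero_vec (kk (S (S n))) v /\
     Rabs (prodR (kk (S (S n))) v) = Bn n * Rabs (lprod (SS n) (fam c))).
Proof.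
  intros H. assert (Hk : (0 < Nat.pow 2 n)%nat) by (apply Nat.neq_0_lt_0, Nat.pow_nonzero; lia).
  exists (phi_beta (S (S n)) g (tauy c)). rewrite kk_eq. split; [|split].
  - exists c; auto.
  - exists 0%nat. split; auto. apply phi_nz; auto.
  - apply prod_phi; auto.
Qed.
End Gen.

Lemma sum_delta k x : sumR (S k) (fun i => IZR (if Nat.eqb i 0 then 1%Z else 0%Z) * x ^ i) = 1.
Proof. induction k. simpl; ring. cbn [sumR] in *. rewrite IHk. simpl. ring. Qed.

Lemma sum_zero k (h : nat -> R) : (forall i, h i = 0) -> sumR k h = 0.
Proof. intros H; induction k; simpl; auto. rewrite IHk, H; ring. Qed.

Theorem mainTheorem12 (m g : nat) (hm : (3 <= m)%nat) (hg : is_gen m g) :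
  max_diversity (kk m) (lattice_OL m g) /\
  max_diversity (kk m) (lattice_Lp m g) /\
  dpmin_is (kk m) (lattice_OL m g)
    (Rpower 2 ((1 - (INR m - 1) * INR (kk m)) / 2)) /\
  dpmin_is (kk m) (lattice_Lp m g)
    (Rpower 2 ((3 - (INR m - 1) * INR (kk m)) / 2)).
Proof.
  destruct m as [|[|n]]; try lia.
  set (famO := fun (c : nat -> Z) (x : R) => sumR (kk (S (S n))) (fun i => IZR (c i) * x ^ i)).
  set (famL := fun (c : nat -> Z) (x : R) => IZR (c O) * (2 + x)
     + sumR (kk (S (S n))) (fun i => if Nat.eqb i 0 then 0 else IZR (c i) * T i x)).
  assert (HO : forall c, IP (famO c)).
  { intros c. unfold famO. apply (IP_sum _ (fun i x => IZR (c i) * x ^ i)).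
    intros i. apply IPmul. constructor. apply IP_pow. }
  assert (HL : forall c, IP (famL c)).
  { intros c. unfold famL. apply IPadd.
    - apply IPmul. constructor. apply IPadd. constructor. constructor.
    - apply (IP_sum _ (fun i x => if Nat.eqb i 0 then 0 else IZR (c i) * T i x)).
      intros i. destruct (Nat.eqb i 0).
      + apply IPext with (fun _ => IZR 0); [constructor|reflexivity].
      + apply IPmul. constructor. apply T_IP. }
  assert (HtO : forall c j, (j < Nat.pow 2 n)%nat -> tau_OL (S (S n)) g c j = famO c (X n g j)).
  { intros; reflexivity. }
  assert (HtL : forall c j, (j < Nat.pow 2 n)%nat -> tau_Lp (S (S n)) g c j = famL c (X n g j)).
  { intros c j _. unfold tau_Lp, famL. f_equal. apply sumR_ext. intros i _.
    destruct (Nat.eqb i 0); auto. f_equal. unfold X, tau_theta_i.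
    rewrite (proj1 (T_cos i _)). f_equal. f_equal. rewrite mult_INR, Nat.mul_1_l.
    unfold Rdiv. ring. }
  assert (EO : lattice_OL (S (S n)) g = Lam n g (tau_OL (S (S n)) g)) by reflexivity.
  assert (EL : lattice_Lp (S (S n)) g = Lam n g (tau_Lp (S (S n)) g)) by reflexivity.
  rewrite EO, EL, Bn_val, Bn_val3.
  pose proof (Bn_pos n) as HB.
  split; [|split; [|split]].
  - exact (gen_maxdiv n g hg _ famO HO HtO).
  - exact (gen_maxdiv n g hg _ famL HL HtL).
  - split.
    + intros r (v & Hv & Hnz & ->).
      destruct (gen_val n g hg _ famO HO HtO v Hv Hnz) as (c & Hc & ->).
      destruct (norm_int n (famO c) (HO c)) as [N HN]. rewrite HN in *.
      assert (N <> 0%Z) by (intro; subst; auto).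
      assert (1 <= Rabs (IZR N)) by (rewrite <- abs_IZR; apply IZR_le; lia).
      nra.
    + intros z Hz.
      set (c := fun i : nat => if Nat.eqb i 0 then 1%Z else 0%Z).
      assert (Hf : forall x, famO c x = 1).
      { intros x. unfold famO, c. rewrite kk_eq.
        destruct (Nat.pow 2 n) eqn:E. exfalso; apply (Nat.pow_nonzero 2 n); lia.
        apply sum_delta. }
      destruct (gen_att n g hg _ famO HtO c) as (v & Hv & Hnz & Hr).
      { rewrite Hf; lra. }
      rewrite (lprod_ext _ _ (fun _ => 1)) in Hr by auto.
      assert (lprod (SS n) (fun _ => 1) = 1) by (clear; induction (SS n); simpl; auto; rewrite IHl; ring).
      rewrite H, Rabs_R1, Rmult_1_r in Hr. rewrite <- Hr. apply Hz. eauto.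
  - split.
    + intros r (v & Hv & Hnz & ->).
      destruct (gen_val n g hg _ famL HL HtL v Hv Hnz) as (c & Hc & ->).
      assert (Hev : exists z, famL c 0 = IZR z /\ Z.even z = true).
      { unfold famL. destruct (sum_even (kk (S (S n)))
           (fun i => if Nat.eqb i 0 then 0 else IZR (c i) * T i 0)) as [s Hs].
        { intros i. destruct (Nat.eqb i 0). exists 0%Z; reflexivity.
          destruct (proj1 (T_even i)) as [w Hw]. exists (c i * w)%Z.
          rewrite Hw, !mult_IZR. ring. }
        exists (2 * (c O + s))%Z. rewrite Hs. split. rewrite !mult_IZR, plus_IZR. ring.
        apply Z.even_spec. exists (c O + s)%Z. ring. }
      destruct Hev as (z & Hz & Ez).
      destruct (norm_even n (famL c) z (HL c) Hz Ez) as [N [HN EN]]. rewrite HN in *.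
      assert (N <> 0%Z) by (intro; subst; auto).
      apply Z.even_spec in EN. destruct EN as [e ->].
      assert (2 <= Rabs (IZR (2 * e))) by (rewrite <- abs_IZR; apply IZR_le; lia).
      nra.
    + intros z Hz.
      set (c := fun i : nat => if Nat.eqb i 0 then 1%Z else 0%Z).
      assert (Hf : forall x, famL c x = 2 + x).
      { intros x. unfold famL, c. simpl. rewrite sum_zero. ring.
        intros i. destruct (Nat.eqb i 0); simpl; ring. }
      destruct (gen_att n g hg _ famL HtL c) as (v & Hv & Hnz & Hr).
      { rewrite Hf. pose proof (X_range n g hg 0). lra. }
      rewrite (lprod_ext _ _ (fun x => 2 + x)) in Hr by auto.
      rewrite (proj2 (norm_two n)) in Hr. rewrite (Rabs_pos_eq 2) in Hr by lra.
      replace (2 * Bn n) with (Bn n * 2) by ring. rewrite <- Hr. apply Hz. eauto.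
Qed.
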